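(* Let $p$ be a prime and let $(r,e,d)$ be integers such that both $(r,e,d)$ and $(r,e+1,d)$ lie in $\mathscr{B}_0(p)$ (so $d=r-1$). Let $L$ be the $d\times(r+d)$ matrix with $(i,j)$ entry $c_{ip+j-2r}$ ($1\le i\le d$, $1\le j\le r+d$) and $V$ the $(r+d)\times d$ matrix with $(i,j)$ entry $s_{i-j}$ ($1\le i\le r+d$, $1\le j\le d$). Then $LV=M_d(f(x)^{e+1})$.
   Context: $\mathscr{B}_0(p)$ is the set of integer triples $(r,e,d)$ with $2\le r\le p+1$, $(p-1)/2<e\le p-1$, $r(p-1-e)\le p-1$, $d=r-1$. $s_1,\dots,s_r$ are independent indeterminates over $\mathbb{F}_p$, $f(x)=x^r+s_1x^{r-1}+\cdots+s_r$, with the conventions $s_0=1$ and $s_i=0$ for $i<0$ or $i>r$. Write $f(x)^e=\sum_i c_ix^i$ ($c_i=0$ for $i<0$). For $k\ge0$, $M_d(f(x)^{k})$ is the $d\times d$ matrix whose $(i,j)$ entry is the coefficient of $x^{ip+j-d-1}$ in $f(x)^{k}$. *)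

(* Defs.v *)
From HB Require Import structures.
From mathcomp Require Import all_boot all_order all_algebra.
From mathcomp Require Import mpoly.
Set Implicit Arguments. Unset Strict Implicit. Unset Printing Implicit Defensive.
Import GRing.Theory.
Local Open Scope ring_scope.

(* The set B_0(p): (r,e,d) with 2 <= r <= p+1, (p-1)/2 < e <= p-1,
   r(p-1-e) <= p-1, d = r-1.  All quantities are naturals here; the
   subtraction p-1-e is exact because e <= p-1 is a conjunct, and
   (p-1)/2 < e is written as the equivalent p-1 < 2e. *)
Definition B0 (p r e d : nat) : Prop :=
  [/\ (2 <= r <= p.+1)%N, (p - 1 < 2 * e)%N, (e <= p - 1)%N,
      (r * (p - 1 - e) <= p - 1)%N & d = (r - 1)%N].

(* ring of coefficients: F_p[s_1, ..., s_r], s_i = 'X_(i-1) *)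
Definition Sring (p r : nat) := {mpoly 'F_p[r]}.

Definition s_ (p r : nat) (i : int) : Sring p r :=
  match i with
  | Posz 0 => 1
  | Posz k.+1 => if @insub _ (fun x => (x < r)%N) 'I_r k is Some m then 'X_m else 0
  | Negz _ => 0
  end.

Definition f_ (p r : nat) : {poly Sring p r} :=
  'X^r + \sum_(1 <= i < r.+1) (s_ p r i)%:P * 'X^(r - i).

Definition zcoef (R : nzRingType) (g : {poly R}) (i : int) : R :=
  match i with Posz k => g`_k | Negz _ => 0 end.

Definition c_ (p r e : nat) (i : int) : Sring p r := zcoef (f_ p r ^+ e) i.

Definition Mmat (R : nzRingType) (p d : nat) (g : {poly R}) : 'M[R]_d :=
  \matrix_(i < d, j < d)
     zcoef g ((i.+1 * p)%:Z + (j.+1)%:Z - d%:Z - 1).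

Definition Lmat (p r e d : nat) : 'M[Sring p r]_(d, r + d) :=
  \matrix_(i < d, j < r + d) c_ p r e ((i.+1 * p)%:Z + (j.+1)%:Z - 2 * r%:Z).

Definition Vmat (p r d : nat) : 'M[Sring p r]_(r + d, d) :=
  \matrix_(i < r + d, j < d) s_ p r ((i.+1)%:Z - (j.+1)%:Z).

(* Main.v *)
Require Import Defs.
From HB Require Import structures.
From mathcomp Require Import all_boot all_order all_algebra.
From mathcomp Require Import mpoly.
From mathcomp Require Import zify ring.
Local Open Scope ring_scope.
Import GRing.Theory.

Lemma zcoefMXn (R : nzRingType) (g : {poly R}) k (N : int) :
  zcoef (g * 'X^k) N = zcoef g (N - k%:Z).
Proof.
case: N => [n|n] /=.
  rewrite coefMXn; case: ltnP => h.
    have -> : (n%:Z - k%:Z) = Negz (k - n).-1.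
      rewrite NegzE; lia.
    by [].
  by rewrite subzn.
by have -> : Negz n - k%:Z = Negz (n + k) by rewrite !NegzE; lia.
Qed.

Lemma zcoef_sum (R : nzRingType) I (s : seq I) (F : I -> {poly R}) N :
  zcoef (\sum_(i <- s) F i) N = \sum_(i <- s) zcoef (F i) N.
Proof.
case: N => [n|n] /=; first by rewrite coef_sum.
by rewrite big1.
Qed.

Lemma zcoefCM (R : nzRingType) (c : R) (g : {poly R}) N :
  zcoef (c%:P * g) N = c * zcoef g N.
Proof. by case: N => [n|n] /=; rewrite ?coefCM ?mulr0. Qed.

Lemma zcoef_neg (R : nzRingType) (g : {poly R}) (N : int) : N < 0 -> zcoef g N = 0.
Proof. by case: N. Qed.

Lemma s_neg p r (z : int) : z < 0 -> s_ p r z = 0.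
Proof. by case: z. Qed.

Lemma s_big p r (z : int) : r%:Z < z -> s_ p r z = 0.
Proof.
case: z => [[|k]|k] //= h.
rewrite insubN //; rewrite -ltnNge; lia.
Qed.

Lemma f_eq p r : f_ p r = \sum_(t < r.+1) (s_ p r t)%:P * 'X^(r - t).
Proof.
rewrite /f_ big_ord_recl /= subn0 mul1r; congr (_ + _).
by rewrite big_add1 /= big_mkord.
Qed.

Lemma zcoef_mulf p r (g : {poly Sring p r}) (N : int) :
  zcoef (g * f_ p r) N = \sum_(t < r.+1) s_ p r t * zcoef g (N - r%:Z + t%:Z).
Proof.
rewrite f_eq mulr_sumr zcoef_sum; apply: eq_bigr => t _.
rewrite mulrCA zcoefCM zcoefMXn; congr (_ * zcoef _ _).
have := ltn_ord t; lia.
Qed.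

Theorem lemma10 (p r e d : nat) :
  prime p -> B0 p r e d -> B0 p r e.+1 d ->
  Lmat p r e d *m Vmat p r d = Mmat p d (f_ p r ^+ e.+1).
Proof.
move=> _ [_ _ _ _ hd] [/andP[hr _] _ _ _ _]; subst d.
apply/matrixP=> i j; rewrite !mxE exprSr zcoef_mulf.
under eq_bigr do rewrite !mxE.
rewrite -(big_mkord xpredT (fun k => c_ p r e ((i.+1 * p)%:Z + (k.+1)%:Z - 2 * r%:Z) *
   s_ p r ((k.+1)%:Z - (j.+1)%:Z))).
have hj := ltn_ord j.
rewrite (big_cat_nat (n := j)) //=; last lia.
rewrite (big_cat_nat (n := j + r.+1) (m := j)) //=; last lia; last lia.
rewrite big1_seq ?add0r; last first.
  move=> k /andP[_]; rewrite mem_index_iota => /andP[_ hk].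
  rewrite s_neg ?mulr0 //; lia.
rewrite [X in _ + X]big1_seq ?addr0; last first.
  move=> k /andP[_]; rewrite mem_index_iota => /andP[hk _].
  rewrite s_big ?mulr0 //; lia.
rewrite -{1}(add0n j) big_addn.
have -> : (j + r.+1 - j = r.+1)%N by lia.
rewrite big_mkord.
apply: eq_bigr => t _; rewrite mulrC; congr (_ * _).
  have -> : ((t + j).+1%:Z - j.+1%:Z = t%:Z) by lia.
  by [].
rewrite /c_; congr (zcoef _ _); lia.
Qed.
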